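(* Let $n$ and $k$ be even positive integers with $n>k$. Then $\mathrm{msum}(n,k)=1$.
   Context: Let $n,k$ be positive integers with $n>k$ and let $S_n$ be the set of permutations $\pi=(\pi_1,\dots,\pi_n)$ of $1,\dots,n$. Indices are taken cyclically: $\pi_{n+i}=\pi_i$. The $k$-consecutive sums of $\pi$ are $s_i=\sum_{j=0}^{k-1}\pi_{i+j}$ for $i=1,\dots,n$. Define $\mathrm{msum}(\pi,k)=\max\{s_i: 1\le i\le n\}-\frac{k(n+1)}{2}$ and $\mathrm{msum}(n,k)=\min\{\mathrm{msum}(\pi,k):\pi\in S_n\}$. *)

(* Defs.v *)
From mathcomp Require Import all_boot all_order all_algebra.
Set Implicit Arguments. Unset Strict Implicit. Unset Printing Implicit Defensive.
Import Order.TTheory GRing.Theory Num.Theory.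

(* A permutation pi = (pi_1,...,pi_n) of 1..n is represented by the sequence
   s = [:: pi_1; ...; pi_n]; S_n is the list  permutations (iota 1 n).
   Indices are 0-based and cyclic: pi_{i+1} = nth 0 s (i %% n). *)

Definition kcsum (s : seq nat) (k i : nat) : nat :=
  \sum_(j < k) nth 0 s ((i + j) %% size s).

Definition maxkcsum (s : seq nat) (k : nat) : nat :=
  \max_(i < size s) kcsum s k i.

Definition msum_perm (s : seq nat) (k : nat) : rat :=
  (maxkcsum s k)%:R - (k * (size s + 1))%:R / 2%:R.

(* msum(n,k) = min over pi in S_n of msum(pi,k); the initial value of the
   fold is msum of the identity permutation, which belongs to S_n. *)
Definition msum (n k : nat) : rat :=
  \big[Order.min/msum_perm (iota 1 n) k]_(s <- permutations (iota 1 n))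
     msum_perm s k.

(* Main.v *)
Require Import Defs.
From mathcomp Require Import all_boot all_order all_algebra.
From mathcomp Require Import zify.
Import Order.TTheory GRing.Theory Num.Theory.

Lemma kcsum_shift s k i : 0 < size s ->
  kcsum s k i.+1 + nth 0 s (i %% size s) = kcsum s k i + nth 0 s ((i + k) %% size s).
Proof.
move=> _; rewrite /kcsum.
transitivity (\sum_(j < k.+1) nth 0 s ((i + j) %% size s)).
  rewrite big_ord_recl addn0 addnC; congr (_ + _); apply: eq_bigr => j _.
  by rewrite /= /bump /= add1n addnS addSn.
by rewrite big_ord_recr.
Qed.

Lemma rot_sum n (F : nat -> nat) j : 0 < n ->
  \sum_(i < n) F ((i + j) %% n) = \sum_(i < n) F i.
Proof.
move=> n0; elim: j => [|j IH].
  by apply: eq_bigr => i _; rewrite addn0 modn_small.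
rewrite -IH; case: n n0 {IH} => // n _.
set G := fun i => F ((i + j) %% n.+1).
have H1 : \sum_(i < n.+2) G i = G 0 + \sum_(i < n.+1) G (bump 0 i) by rewrite big_ord_recl.
have H2 : \sum_(i < n.+2) G i = \sum_(i < n.+1) G i + G n.+1 by rewrite big_ord_recr.
have E : G n.+1 = G 0 by rewrite /G add0n -modnDml modnn add0n.
have -> : \sum_(i < n.+1) F ((i + j.+1) %% n.+1) = \sum_(i < n.+1) G (bump 0 i).
  by apply: eq_bigr => i _; rewrite /G /bump /= add1n addSn addnS.
apply/eqP; by rewrite -(eqn_add2l (G 0)) -H1 H2 E addnC.
Qed.

Lemma sum_kcsum s k : 0 < size s ->
  \sum_(i < size s) kcsum s k i = k * \sum_(i < size s) nth 0 s i.
Proof.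
move=> n0; rewrite /kcsum exchange_big /=.
transitivity (\sum_(j < k) \sum_(i < size s) nth 0 s i).
  by apply: eq_bigr => j _; rewrite (rot_sum (size s) (fun x => nth 0 s x) j n0).
by rewrite sum_nat_const card_ord.
Qed.

Lemma sum_iota n : (\sum_(x <- iota 1 n) x).*2 = n * n.+1.
Proof.
elim: n => [|n IH]; first by rewrite big_nil.
have -> : iota 1 n.+1 = iota 1 (n + 1) by rewrite addn1.
rewrite iotaD big_cat big_seq1 doubleD IH; lia.
Qed.

Lemma sum_perm s n : perm_eq s (iota 1 n) ->
  (\sum_(i < size s) nth 0 s i).*2 = n * n.+1.
Proof.
move=> p; rewrite -sum_iota -(perm_big _ p) /= (big_nth 0) big_mkord //.
Qed.

Lemma lower s n l : perm_eq s (iota 1 n) -> 0 < l -> l.*2 < n ->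
  l * n.+1 < maxkcsum s l.*2.
Proof.
move=> p l0 ln.
have sz : size s = n by rewrite (perm_size p) size_iota.
have n0 : 0 < size s by rewrite sz; lia.
have us : uniq s by rewrite (perm_uniq p) iota_uniq.
have HS := sum_perm _ _ p.
have Hsum : \sum_(i < size s) kcsum s l.*2 i = n * (l * n.+1).
  by rewrite sum_kcsum // mulnCA -HS -!mul2n mulnCA mulnA.
rewrite ltnNge; apply/negP => /bigmax_leqP Hle.
have eqA : forall i0 : 'I_(size s), kcsum s l.*2 i0 = l * n.+1.
  move=> i0; apply/eqP; rewrite eqn_leq Hle //=.
  have : \sum_(i < size s) kcsum s l.*2 i <= kcsum s l.*2 i0 + (n.-1) * (l * n.+1).
    rewrite (bigD1 i0) //= leq_add2l.
    apply: (@leq_trans (\sum_(i < size s | i != i0) l * n.+1)).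
      by apply: leq_sum => i _; exact: Hle.
    rewrite sum_nat_const cardC1 card_ord sz //.
  rewrite Hsum; case: (n) ln => // n' _ /=; lia.
have o0 : 0 < size s by [].
have o1 : 1 < size s by rewrite sz; lia.
have := kcsum_shift s l.*2 0 n0.
rewrite (eqA (Ordinal o0)) (eqA (Ordinal o1)) mod0n add0n modn_small ?sz //.
move/eqP; rewrite eqn_add2l (nth_uniq 0 _ _ us) ?sz //; try lia.
Qed.

Definition cc l m := m %/ gcdn l m.
Definition phi l m i := (i %/ cc l m + (i %% cc l m) * l) %% m.

Lemma cc_facts l m : 0 < m ->
  [/\ 0 < gcdn l m, m = cc l m * gcdn l m, l = l %/ gcdn l m * gcdn l m,
      0 < cc l m & coprime (cc l m) (l %/ gcdn l m)].
Proof.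
move=> m0.
have g0 : 0 < gcdn l m by rewrite gcdn_gt0 m0 orbT.
have mE : m = cc l m * gcdn l m by rewrite /cc divnK // dvdn_gcdr.
have lE : l = l %/ gcdn l m * gcdn l m by rewrite divnK // dvdn_gcdl.
split=> //.
  by move: m0; rewrite {1}mE muln_gt0 => /andP[].
rewrite /coprime; apply/eqP.
have : gcdn (cc l m) (l %/ gcdn l m) * gcdn l m = 1 * gcdn l m.
  by rewrite muln_gcdl -mE -lE mul1n gcdnC.
by move/eqP; rewrite eqn_pmul2r // => /eqP.
Qed.

Lemma step2 m c g l' t1 t2 : 0 < g -> coprime c l' -> t1 <= t2 -> t2 < c ->
  m = c * g -> t1 * (l' * g) = t2 * (l' * g) %[mod m] -> t1 = t2.
Proof.
move=> g0 cop t12 t2c mE E.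
have : m %| t2 * (l' * g) - t1 * (l' * g).
  by rewrite -eqn_mod_dvd ?leq_mul2r ?t12 ?orbT // E.
rewrite -mulnBl mE mulnA dvdn_pmul2r // Gauss_dvdl //.
case: (posnP (t2 - t1)) => [|p]; first by lia.
move/(dvdn_leq p); lia.
Qed.

Lemma phi_inj l m : 0 < m -> {in iota 0 m &, injective (phi l m)}.
Proof.
move=> m0 i1 i2; rewrite !mem_iota !add0n => /andP[_ h1] /andP[_ h2].
have [g0 mE lE c0 cop] := cc_facts l m m0.
set g := gcdn l m in g0 mE lE cop. set c := cc l m in mE c0 cop *.
have rho_lt : forall i, i < m -> i %/ c < g.
  by move=> i; rewrite ltn_divLR // mulnC -mE.
rewrite /phi -/c => E.
have Eg : (i1 %/ c + i1 %% c * l) %% g = (i2 %/ c + i2 %% c * l) %% g.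
  have gm : g %| m by rewrite mE dvdn_mull.
  by have := congr1 (modn^~ g) E; rewrite /= !(modn_dvdm _ gm).
have rhoE : forall i, i < m -> (i %/ c + i %% c * l) %% g = i %/ c.
  move=> i hi; rewrite lE mulnA addnC modnMDl modn_small //; exact: rho_lt.
rewrite (rhoE _ h1) (rhoE _ h2) in Eg.
rewrite Eg in E.
move/eqP: E; rewrite eqn_modDl => /eqP E.
have tE : i1 %% c = i2 %% c.
  rewrite lE in E.
  case: (leqP (i1 %% c) (i2 %% c)) => h.
    by apply: (@step2 m c g (l %/ g) _ _ g0 cop h (ltn_pmod _ c0) mE E).
  by apply/esym/(@step2 m c g (l %/ g) _ _ g0 cop (ltnW h) (ltn_pmod _ c0) mE (esym E)).
by rewrite (divn_eq i1 c) (divn_eq i2 c) Eg tE.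
Qed.

Definition PP l m := mkseq (phi l m) m.
Definition aa l m j := index j (PP l m).

Lemma PP_props l m : 0 < m -> uniq (PP l m) /\ PP l m =i iota 0 m.
Proof.
move=> m0.
have u : uniq (PP l m).
  by rewrite /PP /mkseq map_inj_in_uniq ?iota_uniq //; exact: phi_inj.
split=> //.
have [] := uniq_min_size u (s2 := iota 0 m).
- move=> x /mapP[i _ ->]; rewrite mem_iota add0n /phi ltn_pmod //.
- by rewrite size_iota size_mkseq.
by [].
Qed.

Lemma aa_lt l m j : 0 < m -> j < m -> aa l m j < m.
Proof.
move=> m0 jm; have [_ E] := PP_props l m m0.
have : j \in PP l m by rewrite E mem_iota.
by rewrite -index_mem /aa /PP size_mkseq.
Qed.

Lemma aa_phi l m i : 0 < m -> i < m -> aa l m (phi l m i) = i.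
Proof.
move=> m0 im; have [u _] := PP_props l m m0.
by rewrite /aa -(nth_mkseq 0 (phi l m) im) index_uniq // size_mkseq.
Qed.

Lemma phi_aa l m j : 0 < m -> j < m -> phi l m (aa l m j) = j.
Proof.
move=> m0 jm; have [_ E] := PP_props l m m0.
rewrite -(nth_mkseq 0 (phi l m) (@aa_lt l m j m0 jm)) /aa nth_index // E mem_iota; lia.
Qed.

Lemma aa_step l m j : 0 < m -> j < m -> aa l m ((j + l) %% m) <= (aa l m j).+1.
Proof.
move=> m0 jm.
have [g0 mE lE c0 cop] := cc_facts l m m0.
set g := gcdn l m in g0 mE lE cop. set c := cc l m in mE c0 cop *.
set i := aa l m j.
have hi : i < m by exact: aa_lt.
have ji : j = phi l m i by rewrite phi_aa.
have rho_lt : i %/ c < g by rewrite ltn_divLR // mulnC -mE.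
have iE := divn_eq i c.
rewrite ji /phi -/c modnDml.
set r := i %/ c in rho_lt iE *. set t := i %% c in iE *.
have tc : t < c by rewrite /t ltn_pmod.
case: (ltnP t.+1 c) => ht.
  have ie : i.+1 = r * c + t.+1 by rewrite {1}iE addnS.
  have i1m : i.+1 < m.
    rewrite ie mE; apply: (@leq_trans (r.+1 * c)); first by rewrite mulSn; lia.
    by rewrite mulnC leq_mul2l rho_lt orbT.
  have <- : phi l m i.+1 = (r + t * l + l) %% m.
    rewrite /phi -/c ie divnMDl // divn_small // addn0 modnMDl (modn_small ht).
    by rewrite mulSn [l + _]addnC addnA.
  by rewrite aa_phi.
have tE : t.+1 = c by lia.
have -> : (r + t * l + l) %% m = r.
  rewrite -addnA -mulSnr tE lE mulnCA -mE.
  rewrite addnC modnMDl modn_small //.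
  by apply: (leq_trans rho_lt); rewrite mE leq_pmull.
have -> : r = phi l m (r * c).
  by rewrite /phi -/c mulnK // modnMl mul0n addn0 modn_small // (leq_trans rho_lt) // mE leq_pmull.
rewrite aa_phi //; last by apply: leq_ltn_trans hi; rewrite iE leq_addr.
by apply: leq_trans (leqnSn _); rewrite iE leq_addr.
Qed.

Definition sq l m := mkseq (fun i => if odd i then m.*2 - aa l m i./2 else (aa l m i./2).+1) m.*2.

Lemma sq_size l m : size (sq l m) = m.*2.
Proof. by rewrite size_mkseq. Qed.

Lemma sq_even l m p : p < m -> nth 0 (sq l m) p.*2 = (aa l m p).+1.
Proof. by move=> pm; rewrite nth_mkseq ?odd_double ?doubleK // ltn_double. Qed.

Lemma sq_odd l m p : p < m -> nth 0 (sq l m) p.*2.+1 = m.*2 - aa l m p.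
Proof.
move=> pm; rewrite nth_mkseq /= ?odd_double ?uphalf_double //; lia.
Qed.

Lemma sq_perm l m : 0 < m -> perm_eq (sq l m) (iota 1 m.*2).
Proof.
move=> m0.
have sub : {subset iota 1 m.*2 <= sq l m}.
  move=> v; rewrite mem_iota => /andP[v1 v2].
  case: (leqP v m) => vm.
    have im : v.-1 < m by lia.
    have jm : phi l m v.-1 < m by rewrite /phi ltn_pmod.
    have <- : nth 0 (sq l m) (phi l m v.-1).*2 = v.
      by rewrite sq_even // aa_phi //; lia.
    by rewrite mem_nth // sq_size ltn_double.
  have im : m.*2 - v < m by lia.
  have jm : phi l m (m.*2 - v) < m by rewrite /phi ltn_pmod.
  have <- : nth 0 (sq l m) (phi l m (m.*2 - v)).*2.+1 = v.
    by rewrite sq_odd // aa_phi //; lia.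
  by rewrite mem_nth // sq_size; lia.
have [] := uniq_min_size (iota_uniq 1 m.*2) sub; first by rewrite sq_size size_iota.
move=> sz E.
apply: uniq_perm; last by move=> x; rewrite E.
  by rewrite -(eq_uniq sz E) iota_uniq.
exact: iota_uniq.
Qed.

Lemma sq_pair l m x : 0 < m -> ~~ odd x ->
  nth 0 (sq l m) (x %% m.*2) + nth 0 (sq l m) ((x + 1) %% m.*2) = m.*2.+1.
Proof.
move=> m0 ox.
set r := x %% m.*2.
have rn : r < m.*2 by rewrite /r ltn_pmod // double_gt0.
have orr : ~~ odd r by rewrite /r odd_mod ?odd_double.
have rE : r = (r./2).*2 by have := odd_double_half r; move: orr; case: (odd r) => //= _ ->.
have pm : r./2 < m by rewrite -ltn_double -rE.
rewrite -modnDml -/r (modn_small (_ : r + 1 < m.*2)); last by rewrite rE; lia.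
rewrite rE addn1 sq_even // sq_odd //.
have := @aa_lt l m _ m0 pm; lia.
Qed.

Lemma pair_sum l (G : nat -> nat) :
  \sum_(j < l.*2) G j = \sum_(q < l) (G q.*2 + G q.*2.+1).
Proof.
elim: l => [|l IH]; first by rewrite !big_ord0.
rewrite doubleS !big_ord_recr /= IH addnA.
by [].
Qed.

Lemma kc0 l m : 0 < m -> kcsum (sq l m) l.*2 0 = l * (m.*2).+1.
Proof.
move=> m0; rewrite /kcsum sq_size (pair_sum l (fun j => nth 0 (sq l m) ((0 + j) %% m.*2))).
transitivity (\sum_(q < l) (m.*2).+1); last by rewrite sum_nat_const card_ord.
apply: eq_bigr => q _; rewrite !add0n.
have := @sq_pair l m q.*2 m0; rewrite odd_double addn1; exact.
Qed.

Lemma kc_even l m p : 0 < m -> kcsum (sq l m) l.*2 p.*2 = l * (m.*2).+1.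
Proof.
move=> m0; elim: p => [|p IH]; first exact: kc0.
have n0 : 0 < size (sq l m) by rewrite sq_size double_gt0.
have H1 := kcsum_shift (sq l m) l.*2 p.*2 n0.
have H2 := kcsum_shift (sq l m) l.*2 p.*2.+1 n0.
have P1 := @sq_pair l m p.*2 m0 (negbT (odd_double p)).
have P2 := @sq_pair l m (p.*2 + l.*2) m0.
rewrite -doubleD odd_double doubleD in P2.
have {}P2 := P2 isT.
rewrite sq_size in H1 H2; rewrite addn1 in P1; rewrite addn1 -addSn in P2.
rewrite doubleS; lia.
Qed.

Lemma kc_le l m i : 0 < l -> l < m -> i < m.*2 ->
  kcsum (sq l m) l.*2 i <= l * (m.*2).+1 + 1.
Proof.
move=> l0 lm im.
have m0 : 0 < m by lia.
have := odd_double_half i; case: (odd i) => /= iE.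
  set p := i./2 in iE.
  have pm : p < m by lia.
  have n0 : 0 < size (sq l m) by rewrite sq_size double_gt0.
  have H1 := kcsum_shift (sq l m) l.*2 p.*2 n0.
  rewrite sq_size modn_small ?ltn_double // sq_even // in H1.
  rewrite -doubleD -!muln2 -muln_modl !muln2 sq_even ?ltn_pmod // in H1.
  rewrite kc_even // in H1.
  have := @aa_step l m p m0 pm.
  rewrite -iE add1n; lia.
by rewrite -iE kc_even // leq_addr.
Qed.

Lemma max_sq l m : 0 < l -> l < m -> maxkcsum (sq l m) l.*2 = l * (m.*2).+1 + 1.
Proof.
move=> l0 lm.
have m0 : 0 < m by lia.
apply/eqP; rewrite eqn_leq; apply/andP; split.
  apply/bigmax_leqP => i _; apply: kc_le => //; rewrite -(sq_size l m); exact: ltn_ord.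
rewrite addn1; apply: lower => //; first exact: sq_perm.
by rewrite ltn_double.
Qed.

Lemma msum_perm_eq s n l : perm_eq s (iota 1 n) ->
  msum_perm s l.*2 = ((maxkcsum s l.*2)%:R - (l * n.+1)%:R :> rat)%R.
Proof.
move=> p; rewrite /msum_perm (perm_size p) size_iota addn1.
congr (_ - _)%R; rewrite -mul2n -mulnA natrM mulrAC mulfV ?mul1r //.
Qed.

Lemma bigmin_eq1 (r : seq (seq nat)) (F : seq nat -> rat) x0 :
  (1 <= x0)%R -> (forall s, s \in r -> (1 <= F s)%R) ->
  (exists2 s, s \in r & F s = 1%R) ->
  \big[Order.min/x0]_(s <- r) F s = 1%R.
Proof.
move=> h0 hr [s sr Fs].
apply/le_anti/andP; split.
  elim: r sr {hr} => // a r IH; rewrite in_cons big_cons ge_min => /orP[/eqP <-|/IH ->].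
    by rewrite Fs lexx.
  by rewrite orbT.
elim: r hr {sr} => [|a r IH] hr; first by rewrite big_nil.
rewrite big_cons le_min hr ?mem_head // IH // => t tr; by apply: hr; rewrite in_cons tr orbT.
Qed.

Theorem theorem1p2 (n k : nat) :
  (0 < k)%N -> (k < n)%N -> ~~ odd n -> ~~ odd k -> msum n k = 1%R.
Proof.
move=> k0 kn on ok.
have nE : n = (n./2).*2 by have := odd_double_half n; rewrite (negbTE on) add0n.
have kE : k = (k./2).*2 by have := odd_double_half k; rewrite (negbTE ok) add0n.
set m := n./2 in nE; set l := k./2 in kE.
have l0 : 0 < l by lia.
have lm : l < m by lia.
rewrite /msum; apply: bigmin_eq1.
- rewrite kE (@msum_perm_eq _ n) ?perm_refl // lerBrDr addrC natr1 ler_nat.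
  by apply: lower; rewrite ?perm_refl // -kE.
- move=> s; rewrite mem_permutations => p.
  rewrite kE (@msum_perm_eq _ n) // lerBrDr addrC natr1 ler_nat.
  by apply: lower => //; rewrite -kE.
- exists (sq l m).
    by rewrite mem_permutations nE sq_perm //; lia.
  rewrite kE (@msum_perm_eq _ n) ?nE ?sq_perm ?max_sq //; last by lia.
  by rewrite -nE natrD addrAC subrr add0r.
Qed.
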